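(* Let $f\colon X\to Y$ be a dc-embedding of two-sorted ultrametric spaces. (1) $f$ is continuous if and only if $D_f$ is continuous at $0$ or $X$ is discrete. (2) $f$ is uniformly continuous if and only if $D_f$ is continuous at $0$ or $X$ is uniformly discrete. In particular, a dc-isomorphism is always a uniform homeomorphism.
   Context: A two-sorted ultrametric space is a triple $(X,d_X,D_X)$ where $D_X$ is a linearly ordered set with least element $0$, $X$ is a set, and $d_X\colon X\times X\to D_X$ is symmetric, $d_X(x,y)=0\iff x=y$, and $d_X(x,z)\le\max\{d_X(x,y),d_X(y,z)\}$. A dc-embedding $f\colon X\to Y$ is an injection $f\colon X\to Y$ together with an order embedding $D_f\colon D_X\to D_Y$ with $D_f(0)=0$ such that $d_Y(f(x),f(x'))=D_f(d_X(x,x'))$; a dc-isomorphism is one bijective in both sorts. For $a\in X$ and $r\in D_X\setminus\{0\}$, $B_r(a)=\{x: d_X(x,a)<r\}$. The topology of $X$: $U$ is open iff for each $a\in U$ there is $r\in D_X\setminus\{0\}$ with $B_r(a)\subseteq U$; the uniformity is generated by the partitions $\{B_r(a):a\in X\}$, $r\in D_X\setminus\{0\}$. Thus $f$ is continuous iff for all $\varepsilon\in D_Y\setminus\{0\}$ and $x\in X$ there is $\delta\in D_X\setminus\{0\}$ with $f[B_\delta(x)]\subseteq B_\varepsilon(f(x))$, and uniformly continuous if $\delta$ can be chosen independently of $x$. $D_f$ is continuous at $0$ if there is no $\varepsilon\in D_Y$ with $0<\varepsilon<D_f(r)$ for all $r\in D_X\setminus\{0\}$. $X$ is discrete if for each $x$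 there is $\varepsilon\in D_X\setminus\{0\}$ with $B_\varepsilon(x)=\{x\}$, and uniformly discrete if $\varepsilon$ can be chosen independently of $x$. *)

(* Defs.v *)
From HB Require Import structures.
From mathcomp Require Import all_boot all_order.
Set Implicit Arguments. Unset Strict Implicit. Unset Printing Implicit Defensive.
Import Order.TTheory.
Local Open Scope order_scope.

(* A two-sorted ultrametric space (X, d_X, D_X): D_X is a linearly ordered
   set with least element 0 (a bOrderType, 0 := \bot), and d : X -> X -> D. *)
Record ultrametric (disp : Order.disp_t) (D : bOrderType disp) (X : Type) := Ultrametric {
  udist :> X -> X -> D;
  udist_sym : forall x y, udist x y = udist y x;
  udist_eq0 : forall x y, udist x y = \bot <-> x = y;
  udist_ultra : forall x y z, udist x z <= Order.max (udist x y) (udist y z)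
}.

Section Defs.
Context (dX : Order.disp_t) (DX : bOrderType dX) (X : Type) (mX : ultrametric DX X).
Context (dY : Order.disp_t) (DY : bOrderType dY) (Y : Type) (mY : ultrametric DY Y).

Definition ball (disp : Order.disp_t) (D : bOrderType disp) (T : Type)
  (m : ultrametric D T) (a : T) (r : D) : T -> Prop := fun x => m x a < r.

Definition dc_embedding (f : X -> Y) (Df : DX -> DY) : Prop :=
  [/\ injective f, {mono Df : r s / r <= s}, Df \bot = \bot &
      forall x x', mY (f x) (f x') = Df (mX x x')].

Definition um_continuous (f : X -> Y) : Prop :=
  forall (eps : DY), \bot < eps -> forall x : X,
    exists delta : DX, \bot < delta /\
      (forall x', ball mX x delta x' -> ball mY (f x) eps (f x')).

Definition um_unif_continuous (f : X -> Y) : Prop :=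
  forall (eps : DY), \bot < eps ->
    exists delta : DX, \bot < delta /\ forall x : X,
      (forall x', ball mX x delta x' -> ball mY (f x) eps (f x')).

Definition cont_at0 (Df : DX -> DY) : Prop :=
  ~ exists eps : DY, \bot < eps /\ forall r : DX, \bot < r -> eps < Df r.

End Defs.

Definition um_discrete (disp : Order.disp_t) (D : bOrderType disp) (T : Type)
  (m : ultrametric D T) : Prop :=
  forall x : T, exists eps : D, \bot < eps /\ forall y, ball m x eps y -> y = x.

Definition um_unif_discrete (disp : Order.disp_t) (D : bOrderType disp) (T : Type)
  (m : ultrametric D T) : Prop :=
  exists eps : D, \bot < eps /\ forall x y : T, ball m x eps y -> y = x.

(* Main.v *)
Require Import Defs.
From HB Require Import structures.
From mathcomp Require Import all_boot all_order.
From Stdlib Require Import Classical.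
Import Order.TTheory.
Local Open Scope order_scope.

Theorem lemma2p13
  (dX : Order.disp_t) (DX : bOrderType dX) (X : Type) (mX : ultrametric DX X)
  (dY : Order.disp_t) (DY : bOrderType dY) (Y : Type) (mY : ultrametric DY Y)
  (f : X -> Y) (Df : DX -> DY) :
  dc_embedding mX mY f Df ->
  [/\ (um_continuous mX mY f <-> cont_at0 Df \/ um_discrete mX),
      (um_unif_continuous mX mY f <-> cont_at0 Df \/ um_unif_discrete mX) &
      (forall g : Y -> X, cancel f g -> cancel g f -> (forall s : DY, exists r : DX, Df r = s) ->
         um_unif_continuous mX mY f /\ um_unif_continuous mY mX g)].
Proof.
case=> finj Dmono Df0 fd.
have Dlt : forall r s, (Df r < Df s) = (r < s) by move=> r s; rewrite !ltNge Dmono.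
have pos : forall x x', x' <> x -> \bot < mX x' x.
  move=> x x' ne; rewrite lt_def le0x andbT; apply/eqP => /(udist_eq0 mX) //.
have c0uc : cont_at0 Df -> um_unif_continuous mX mY f.
  move=> c eps eps0.
  have [r Hr] : exists r, ~ (\bot < r -> eps < Df r).
    apply: not_all_ex_not => H; apply: c; by exists eps.
  have r0 : \bot < r := not_imply_elim _ _ Hr.
  have Hr' := not_imply_elim2 _ _ Hr.
  exists r; split => // x x'; rewrite /ball fd => h.
  apply: (lt_le_trans (_ : _ < Df r)); first by rewrite Dlt.
  by rewrite leNgt; apply/negP.
have ucc : um_unif_continuous mX mY f -> um_continuous mX mY f.
  move=> H eps e0 x; have [d [d0 Hd]] := H eps e0; by exists d; split => //; apply: Hd.
have nc0 : ~ cont_at0 Df -> exists e, \bot < e /\ forall r, \bot < r -> e < Df r.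
  by move=> nc; apply: NNPP.
have key : forall e, (forall r, \bot < r -> e < Df r) -> forall x y,
    ball mY (f x) e (f y) -> y = x.
  move=> e He x y; rewrite /ball fd => hb; apply: NNPP => ne.
  by have := He _ (pos _ _ ne); rewrite ltNge (ltW hb).
split.
- split.
  + move=> H; case: (classic (cont_at0 Df)) => c; [by left | right].
    have [e [e0 He]] := nc0 c => x.
    have [d [d0 Hd]] := H e e0 x; exists d; split => // y hy.
    exact: (key e He x y (Hd y hy)).
  + case=> [c|disc]; first exact: ucc (c0uc c).
    move=> eps e0 x; have [d [d0 Hd]] := disc x; exists d; split => // y hy.
    by rewrite (Hd y hy) /ball (proj2 (udist_eq0 _ _ _) erefl).
- split.
  + move=> H; case: (classic (cont_at0 Df)) => c; [by left | right].
    have [e [e0 He]] := nc0 c.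
    have [d [d0 Hd]] := H e e0; exists d; split => // x y hy.
    exact: (key e He x y (Hd x y hy)).
  + case=> [c|[d [d0 Hd]]]; first exact: c0uc c.
    move=> eps e0; exists d; split => // x y hy.
    by rewrite (Hd x y hy) /ball (proj2 (udist_eq0 _ _ _) erefl).
- move=> g fK gK Dsurj; split.
  + apply: c0uc => -[e [e0 He]].
    have [r0 Hr0] := Dsurj e.
    have r0p : \bot < r0 by rewrite -Dlt Df0 Hr0.
    by have := He _ r0p; rewrite Hr0 ltxx.
  + move=> eps e0; exists (Df eps); split; first by rewrite -Df0 Dlt.
    move=> y y'; rewrite /ball -{1}(gK y) -{1}(gK y') fd Dlt //.
Qed.
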